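(* Let $\mathcal{B}=\{l\le l_0\}$ be a regular spherically symmetric ball of initial data (no asymptotic assumption) on which the dominant energy condition $\mu\ge|j|$ holds. If on the boundary sphere $\partial\mathcal{B}=\{l=l_0\}$ one has $\theta^->0$ and $\theta^+>0$, then the Misner–Sharp energy of the boundary is non-negative: $\mathcal{E}(l_0)\ge 0$.
   Context: Regular spherically symmetric data: metric $h=dl^2+r(l)^2(d\theta^2+\sin^2\theta\,d\phi^2)$ on the ball with $r$ smooth, $r(0)=0$, $r'(0)=1$; second fundamental form $K_{ij}=n_in_jK_l+(h_{ij}-n_in_j)K_r$ with $n=\partial_l$; constraints $K_r(K_r+2K_l)-\frac1{r^2}(r'^2+2rr''-1)=8\pi\mu$ and $K_r'+\frac{r'}{r}(K_r-K_l)=4\pi j$. Null expansions $\theta^\pm=\frac2r(r'\pm K_r r)$. Misner–Sharp energy $\mathcal{E}(l)=\frac{r}{2}\bigl(1-\frac{r^2}{4}\theta^+\theta^-\bigr)$. *)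

(* Defs.v *)
From Stdlib Require Import Reals.
Open Scope R_scope.

Definition theta_plus (r dr Kr : R -> R) (l : R) : R := 2 / r l * (dr l + Kr l * r l).
Definition theta_minus (r dr Kr : R -> R) (l : R) : R := 2 / r l * (dr l - Kr l * r l).

Definition misner_sharp (r dr Kr : R -> R) (l : R) : R :=
  r l / 2 * (1 - (r l)^2 / 4 * theta_plus r dr Kr l * theta_minus r dr Kr l).

(* Smoothness is encoded as: r is C^2
   (r', r'' exist, r'' continuous), K_r is C^1, K_l is continuous; these
   are required on all of R (any smooth data on [0,l0] extends). *)
Record regular_ss_data (l0 : R) (r dr ddr Kl Kr dKr mu j : R -> R) : Prop := {
  rd_l0 : 0 < l0;
  rd_dr : forall l, derivable_pt_lim r l (dr l);
  rd_ddr : forall l, derivable_pt_lim dr l (ddr l);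
  rd_ddr_cont : forall l, continuity_pt ddr l;
  rd_dKr : forall l, derivable_pt_lim Kr l (dKr l);
  rd_dKr_cont : forall l, continuity_pt dKr l;
  rd_Kl_cont : forall l, continuity_pt Kl l;
  rd_r0 : r 0 = 0;
  rd_dr0 : dr 0 = 1;
  rd_Kreg0 : Kl 0 = Kr 0;
  rd_rpos : forall l, 0 < l <= l0 -> 0 < r l;
  rd_ham : forall l, 0 < l <= l0 ->
    Kr l * (Kr l + 2 * Kl l) - / (r l)^2 * ((dr l)^2 + 2 * r l * ddr l - 1)
      = 8 * PI * mu l;
  rd_mom : forall l, 0 < l <= l0 ->
    dKr l + dr l / r l * (Kr l - Kl l) = 4 * PI * j l
}.

(* Main.v *)
Require Import Defs.
From Stdlib Require Import Reals Lra Psatz Classical.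
Open Scope R_scope.

Lemma deq f x l l' : derivable_pt_lim f x l -> l = l' -> derivable_pt_lim f x l'.
Proof. intros H ->; exact H. Qed.

Lemma G_deriv r dr ddr Kr dKr x : (forall l, derivable_pt_lim r l (dr l)) -> (forall l, derivable_pt_lim dr l (ddr l)) ->
 (forall l, derivable_pt_lim Kr l (dKr l)) ->
 derivable_pt_lim (fun l => r l * (1 - dr l * dr l + Kr l * Kr l * (r l * r l))) x
  (dr x - dr x ^ 3 + 3 * dr x * Kr x ^2 * r x ^ 2 - 2 * r x * dr x * ddr x + 2 * Kr x * dKr x * r x ^ 3).
Proof.
intros H1 H2 H3.
eapply deq.
apply derivable_pt_lim_mult. apply H1.
apply derivable_pt_lim_plus. apply derivable_pt_lim_minus. apply derivable_pt_lim_const.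
apply derivable_pt_lim_mult; apply H2.
apply derivable_pt_lim_mult. apply derivable_pt_lim_mult; apply H3.
apply derivable_pt_lim_mult; apply H1.
simpl. ring. Qed.

Lemma cont_pos f x : continuity_pt f x -> f x > 0 ->
  exists d, d > 0 /\ forall y, Rabs (y - x) < d -> f y > 0.
Proof.
intros Hc Hp. unfold continuity_pt, continue_in, limit1_in, limit_in in Hc.
destruct (Hc (f x) Hp) as [d [Hd H]]. exists d; split; auto.
intros y Hy. destruct (Req_dec y x) as [->|Hne]; auto.
assert (Hh := H y). unfold D_x, no_cond, R_dist in Hh; simpl in Hh.
assert (Rabs (f y - f x) < f x) by (apply Hh; split; auto).
apply Rabs_def2 in H0. lra.
Qed.

Theorem mainTheorem2 (l0 : R) (r dr ddr Kl Kr dKr mu j : R -> R) :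
  regular_ss_data l0 r dr ddr Kl Kr dKr mu j ->
  (forall l, 0 < l <= l0 -> Rabs (j l) <= mu l) ->
  theta_minus r dr Kr l0 > 0 ->
  theta_plus r dr Kr l0 > 0 ->
  misner_sharp r dr Kr l0 >= 0.
Proof.
intros D Hdec Hm Hp.
destruct D as [rd_l0 rd_dr rd_ddr rd_ddr_cont rd_dKr rd_dKr_cont rd_Kl_cont rd_r0 rd_dr0 rd_Kreg0 rd_rpos0 rd_ham0 rd_mom0].
set (G := fun l => r l * (1 - dr l * dr l + Kr l * Kr l * (r l * r l))).
set (p := fun x => dr x - Kr x * r x).
set (q := fun x => dr x + Kr x * r x).
assert (Hr0 : 0 < r l0) by (apply rd_rpos0; lra).
assert (Hpl0 : p l0 > 0).
{ unfold theta_minus in Hm. unfold p. assert (0 < 2 / r l0) by (apply Rdiv_lt_0_compat; lra).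
  nra. }
assert (Hql0 : q l0 > 0).
{ unfold theta_plus in Hp. unfold q. assert (0 < 2 / r l0) by (apply Rdiv_lt_0_compat; lra).
  nra. }
assert (Hcont : forall f df, (forall l, derivable_pt_lim f l (df l)) -> forall l, continuity_pt f l).
{ intros f df Hf l. apply derivable_continuous_pt. exists (df l). apply Hf. }
assert (Hcp : forall l, continuity_pt p l).
{ intro l. unfold p. apply continuity_pt_minus. eapply Hcont; eauto.
  apply continuity_pt_mult; eapply Hcont; eauto. }
assert (Hcq : forall l, continuity_pt q l).
{ intro l. unfold q. apply continuity_pt_plus. eapply Hcont; eauto.
  apply continuity_pt_mult; eapply Hcont; eauto. }
assert (Hmono : forall a, 0 <= a <= l0 -> G a >= 0 ->
   (forall l, a < l <= l0 -> p l > 0 /\ q l > 0) -> G l0 >= 0).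
{ intros a Ha HGa Hpos. destruct (Req_dec a l0) as [<-|Hne]; auto.
  destruct (MVT_cor2 G (fun x => dr x - dr x ^ 3 + 3 * dr x * Kr x ^2 * r x ^ 2 - 2 * r x * dr x * ddr x + 2 * Kr x * dKr x * r x ^ 3) a l0) as [c [Hc Hcin]].
  lra. intros c _. apply G_deriv; auto.
  assert (Hcl : 0 < c <= l0) by lra.
  destruct (Hpos c ltac:(lra)) as [Hpc Hqc]. unfold p, q in Hpc, Hqc.
  assert (Hrc := rd_rpos0 c Hcl).
  assert (Hh := rd_ham0 c Hcl). assert (Hmo := rd_mom0 c Hcl).
  assert (H1 : 8 * PI * mu c * r c ^ 2 = Kr c * (Kr c + 2 * Kl c) * r c ^ 2 - (dr c ^ 2 + 2 * r c * ddr c - 1)).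
  { rewrite <- Hh. field. lra. }
  assert (H2 : 4 * PI * j c * r c = dKr c * r c + dr c * (Kr c - Kl c)).
  { rewrite <- Hmo. field. lra. }
  assert (E : dr c - dr c ^ 3 + 3 * dr c * Kr c ^2 * r c ^ 2 - 2 * r c * dr c * ddr c + 2 * Kr c * dKr c * r c ^ 3
     = 8 * PI * r c ^ 2 * (mu c * dr c + j c * (Kr c * r c))).
  { transitivity (dr c * (Kr c * (Kr c + 2 * Kl c) * r c ^ 2 - (dr c ^ 2 + 2 * r c * ddr c - 1))
       + 2 * Kr c * r c ^ 2 * (dKr c * r c + dr c * (Kr c - Kl c))). ring.
    rewrite <- H1, <- H2. ring. }
  rewrite E in Hc.
  assert (Hj := Hdec c Hcl).
  assert (HjK : - (Rabs (j c) * Rabs (Kr c * r c)) <= j c * (Kr c * r c)).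
  { rewrite <- Rabs_mult. pose proof (Rle_abs (- (j c * (Kr c * r c)))). rewrite Rabs_Ropp in H. lra. }
  assert (HK : Rabs (Kr c * r c) < dr c).
  { unfold Rabs; destruct Rcase_abs; lra. }
  assert (Hja := Rabs_pos (j c)).
  assert (0 <= mu c * dr c + j c * (Kr c * r c)) by nra.
  assert (0 < PI) by apply PI_RGT_0.
  assert (0 <= 8 * PI * r c ^ 2 * (mu c * dr c + j c * (Kr c * r c))).
  { apply Rmult_le_pos; [|auto]. assert (0 < r c ^ 2) by (apply pow_lt; lra). nra. }
  nra. }
assert (HG : G l0 >= 0).
{ destruct (classic (exists x, 0 <= x <= l0 /\ (p x <= 0 \/ q x <= 0))) as [Hex|Hnex].
  - set (S := fun x => 0 <= x <= l0 /\ (p x <= 0 \/ q x <= 0)).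
    assert (Hb : bound S) by (exists l0; intros x [Hx _]; lra).
    destruct (completeness S Hb Hex) as [l1 [Hub Hlub]].
    destruct Hex as [x0 Hx0].
    assert (Hl1a : 0 <= l1) by (pose proof (Hub x0 Hx0); lra).
    assert (Hl1b : l1 <= l0) by (apply Hlub; intros x [Hx _]; lra).
    assert (Hle : p l1 <= 0 \/ q l1 <= 0).
    { destruct (Rle_or_lt (p l1) 0) as [h|hp]; [auto|].
      destruct (Rle_or_lt (q l1) 0) as [h|hq]; [auto|].
      exfalso.
      destruct (cont_pos p l1 (Hcp l1) hp) as [d1 [Hd1 H1]].
      destruct (cont_pos q l1 (Hcq l1) hq) as [d2 [Hd2 H2]].
      set (d := Rmin d1 d2).
      assert (d <= d1) by apply Rmin_l. assert (d <= d2) by apply Rmin_r.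
      assert (0 < d) by (apply Rmin_pos; auto).
      assert (l1 <= l1 - d).
      { apply Hlub. intros x [Hx Hpq]. destruct (Rle_or_lt x (l1 - d)) as [h|h]; auto.
        pose proof (Hub x (conj Hx Hpq)).
        assert (Rabs (x - l1) < d) by (unfold Rabs; destruct Rcase_abs; lra).
        pose proof (H1 x ltac:(lra)). pose proof (H2 x ltac:(lra)). lra. }
      lra. }
    assert (Hp1 : p l1 >= 0).
    { destruct (Rlt_or_le (p l1) 0) as [hn|]; [|lra]. exfalso.
      assert (hn' : (fun x => - p x) l1 > 0) by (simpl; lra).
      destruct (cont_pos (fun x => - p x) l1 (continuity_pt_opp _ _ (Hcp l1)) hn') as [d [Hd H]].
      assert (Hl1l0 : l1 < l0) by (destruct (Req_dec l1 l0); [subst; lra|lra]).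
      set (y := Rmin (l1 + d/2) l0).
      assert (y <= l1 + d/2) by apply Rmin_l. assert (y <= l0) by apply Rmin_r.
      assert (l1 < y) by (apply Rmin_glb_lt; lra).
      assert (HSy : S y).
      { split. lra. left. assert (Rabs (y - l1) < d) by (unfold Rabs; destruct Rcase_abs; lra).
        pose proof (H y H3). simpl in H4. lra. }
      pose proof (Hub y HSy). lra. }
    assert (Hq1 : q l1 >= 0).
    { destruct (Rlt_or_le (q l1) 0) as [hn|]; [|lra]. exfalso.
      assert (hn' : (fun x => - q x) l1 > 0) by (simpl; lra).
      destruct (cont_pos (fun x => - q x) l1 (continuity_pt_opp _ _ (Hcq l1)) hn') as [d [Hd H]].
      assert (Hl1l0 : l1 < l0) by (destruct (Req_dec l1 l0); [subst; lra|lra]).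
      set (y := Rmin (l1 + d/2) l0).
      assert (y <= l1 + d/2) by apply Rmin_l. assert (y <= l0) by apply Rmin_r.
      assert (l1 < y) by (apply Rmin_glb_lt; lra).
      assert (HSy : S y).
      { split. lra. right. assert (Rabs (y - l1) < d) by (unfold Rabs; destruct Rcase_abs; lra).
        pose proof (H y H3). simpl in H4. lra. }
      pose proof (Hub y HSy). lra. }
    apply (Hmono l1). lra.
    + assert (Hr1 : 0 <= r l1).
      { destruct (Req_dec l1 0) as [->|]; [lra|]. left; apply rd_rpos0; lra. }
      assert (Hpq : p l1 * q l1 = 0).
      { destruct Hle; [replace (p l1) with 0 by lra|replace (q l1) with 0 by lra]; ring. }
      unfold p, q in Hpq. unfold G.
      replace (1 - dr l1 * dr l1 + Kr l1 * Kr l1 * (r l1 * r l1)) with 1 by nra. lra.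
    + intros l Hl. destruct (Rle_or_lt (p l) 0); destruct (Rle_or_lt (q l) 0); try (split; lra);
      (assert (S l) by (split; [lra|auto]); pose proof (Hub l H1); lra).
  - apply (Hmono 0). lra.
    + unfold G. rewrite rd_r0. lra.
    + intros l Hl. destruct (Rle_or_lt (p l) 0); destruct (Rle_or_lt (q l) 0); try (split; lra);
      exfalso; apply Hnex; exists l; split; auto; lra. }
unfold misner_sharp, theta_plus, theta_minus. unfold G in HG.
replace (r l0 / 2 * (1 - r l0 ^ 2 / 4 * (2 / r l0 * (dr l0 + Kr l0 * r l0)) * (2 / r l0 * (dr l0 - Kr l0 * r l0))))
  with (r l0 * (1 - dr l0 * dr l0 + Kr l0 * Kr l0 * (r l0 * r l0)) / 2) by (field; lra).
lra.
Qed.
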